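(* Let $m\ge d\ge1$, $\lambda=d/m$, and let $p,q$ be polynomials of degree $d$ with nonnegative real roots, with bivariate extensions $p(x,y)=y^{m-d}p(xy)$, $q(x,y)=y^{m-d}q(xy)$. Then \[ [p\boxplus_{d,\lambda}q](x,y)=\frac{(m-d)!}{d!\,m!}\sum_{k=0}^d(\partial_x\partial_y)^{d-k}p(x,y)\cdot\big[(\partial_x\partial_y)^kq\big](0,1), \] and \[ (p\boxplus_{d,\lambda}q)(x)=\frac{(m-d)!}{d!\,m!}\sum_{k=0}^d\big[(\partial_x\partial_y)^{d-k}p\big](x,1)\cdot\big[(\partial_x\partial_y)^kq\big](0,1). \]
   Context: For $p=\sum_{i=0}^d(-1)^ia_ix^{d-i}$, $q=\sum_{i=0}^d(-1)^ib_ix^{d-i}$: $(p\boxplus_{d,\lambda}q)(x)=\sum_{k=0}^dx^{d-k}(-1)^k\sum_{i+j=k}\frac{(d-i)!(d-j)!}{d!(d-k)!}\frac{(m-i)!(m-j)!}{m!(m-k)!}a_ib_j$, and $[p\boxplus_{d,\lambda}q](x,y):=y^{m-d}(p\boxplus_{d,\lambda}q)(xy)$. *)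

(* Defs.v *)
From mathcomp Require Import all_boot all_order all_algebra.
Set Implicit Arguments. Unset Strict Implicit. Unset Printing Implicit Defensive.
Import Order.TTheory GRing.Theory Num.Theory.
Local Open Scope ring_scope.

(* Bivariate polynomials are represented as {poly {poly R}}:
   the OUTER variable is y, the INNER variable is x,
   i.e. P = \sum_l c_l(x) y^l with c_l : {poly R}. *)

Section Defs.
Variable R : fieldType.

(* a_i = coefficient such that p = \sum_i (-1)^i a_i x^(d-i) *)
Definition scoef (d : nat) (p : {poly R}) (i : nat) : R :=
  (-1) ^+ i * p`_(d - i).

Definition boxplus (d m : nat) (p q : {poly R}) : {poly R} :=
  \sum_(k < d.+1)
    ((-1) ^+ k *
      \sum_(i < k.+1)
        ((((d - i)`! * (d - (k - i))`!)%:R / ((d`! * (d - k)`!)%:R)) *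
         (((m - i)`! * (m - (k - i))`!)%:R / ((m`! * (m - k)`!)%:R)) *
         scoef d p i * scoef d q (k - i))) *: 'X^(d - k).

Definition biv (d m : nat) (p : {poly R}) : {poly {poly R}} :=
  \sum_(j < size p) (p`_j *: 'X^j)%:P * 'X^(j + (m - d)).

Definition dX (P : {poly {poly R}}) : {poly {poly R}} := map_poly (@deriv R) P.
Definition dY (P : {poly {poly R}}) : {poly {poly R}} := deriv P.
Definition dXdY (P : {poly {poly R}}) : {poly {poly R}} := dX (dY P).

Definition evalXY (P : {poly {poly R}}) (x0 y0 : R) : R := (P.[y0%:P]).[x0].
Definition evalY (P : {poly {poly R}}) (y0 : R) : {poly R} := P.[y0%:P].

End Defs.

Definition deg_nonneg_roots (R : realFieldType) (d : nat) (p : {poly R}) : Prop :=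
  size p = d.+1 /\
  exists rs : seq R, all (fun r => 0 <= r) rs /\
    p = lead_coef p *: \prod_(r <- rs) ('X - r%:P).

(* Main.v *)
Require Import Defs.
From mathcomp Require Import all_boot all_order all_algebra.
From mathcomp Require Import ring zify.
Import Order.TTheory GRing.Theory Num.Theory.
Local Open Scope ring_scope.

Section H.
Variable R : numFieldType.

Lemma fact_neq0 n : (n`!%:R : R) != 0.
Proof. by rewrite pnatr_eq0 -lt0n fact_gt0. Qed.

Lemma coef_dXdY (P : {poly {poly R}}) l s :
  (dXdY P)`_l`_s = P`_l.+1`_s.+1 *+ l.+1 *+ s.+1.
Proof.
rewrite /dXdY /dX /dY coef_map_id0 ?deriv0 // coef_deriv coef_deriv.
by rewrite coefMn.
Qed.

End H.


Lemma fracS (R : numFieldType) (a : R) l : a / (l.+1`!)%:R *+ l.+1 = a / (l`!)%:R.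
Proof.
have h1 := fact_neq0 R l.
have h2 : (l.+1%:R : R) != 0 by rewrite pnatr_eq0.
rewrite factS natrM -mulr_natr. field. by rewrite h1 nat1r h2.
Qed.

Lemma coef_iter (R : numFieldType) n (P : {poly {poly R}}) l s :
  (iter n (@dXdY R) P)`_l`_s = P`_(l+n)`_(s+n) *
     ((l+n)`!%:R / l`!%:R) * ((s+n)`!%:R / s`!%:R).
Proof.
elim: n l s => [|n IH] l s.
  by rewrite !addn0 /= !divff ?fact_neq0 ?mulr1.
rewrite iterS coef_dXdY IH !addSnnS -mulr_natr -mulr_natr (factS l) (factS s) !natrM.
have h1 := fact_neq0 R l; have h2 := fact_neq0 R s.
have h3 : (l.+1%:R : R) != 0 by rewrite pnatr_eq0.
have h4 : (s.+1%:R : R) != 0 by rewrite pnatr_eq0.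
field. by rewrite h1 h2 !nat1r h3 h4.
Qed.


Lemma coef_biv (R : numFieldType) d m (p : {poly R}) l s :
  (biv d m p)`_l`_s = if l == (s + (m - d))%N then p`_s else 0.
Proof.
rewrite /biv coef_sum coef_sum.
under eq_bigr => j _ do rewrite coefCM coefXn.
under eq_bigr => j _ do rewrite mulr_natr coefMn coefZ coefXn.
rewrite (eq_bigr (fun j : 'I_(size p) => if (j == s :> nat) then (if l == (s + (m-d))%N then p`_s else 0) else 0)).
  rewrite -big_mkcond (big_ord1_eq _ (fun _ => if l == (s + (m-d))%N then p`_s else 0) s (size p)); case: ltnP => // hs.
  by rewrite nth_default // if_same.
move=> j _; rewrite eq_sym; case: eqP => [->|_]; last by rewrite mulr0 mul0rn.
by rewrite mulr1; case: eqP.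
Qed.

Lemma evalY_biv (R : numFieldType) d m (p : {poly R}) : evalY (biv d m p) 1 = p.
Proof.
rewrite /evalY /biv horner_sum.
under eq_bigr => j _ do rewrite hornerCM hornerXn expr1n mulr1.
by rewrite -poly_def coefK.
Qed.


Lemma evalXY_iter (R : numFieldType) k d m (q : {poly R}) :
  evalXY (iter k (@dXdY R) (biv d m q)) 0 1 =
  q`_k * ((k + (m - d))`!%:R / (m - d)`!%:R) * (k`!%:R).
Proof.
set P := iter k _ _.
rewrite /evalXY horner_coef0 (@horner_coef_wide _ (size P + (m-d).+1)) ?leq_addr //.
rewrite coef_sum.
have hi : (m - d < size P + (m-d).+1)%N by rewrite ltn_addl.
rewrite (bigD1 (Ordinal hi)) //= big1 ?addr0.
  rewrite -polyC_exp expr1n coefMC mulr1 /P coef_iter coef_biv add0n addnC eqxx.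
  by rewrite fact0 mulr1n divr1.
move=> i /eqP hne; rewrite -polyC_exp expr1n coefMC mulr1 /P coef_iter coef_biv add0n addnC eqn_add2l.
case: eqP => [h|]; last by rewrite !mul0r.
by exfalso; apply: hne; apply: val_inj; rewrite /= h.
Qed.


Lemma key (R : numFieldType) d m (p q : {poly R}) s :
  size p = d.+1 -> size q = d.+1 -> (d <= m)%N ->
  (boxplus d m p q)`_s = (m - d)`!%:R / (d`! * m`!)%:R *
  \sum_(k < d.+1) p`_(s + (d - k)) *
     ((s + (m - d) + (d - k))`!%:R / (s + (m - d))`!%:R) *
     ((s + (d - k))`!%:R / s`!%:R) *
     (q`_k * ((k + (m - d))`!%:R / (m - d)`!%:R) * k`!%:R).
Proof.
move=> hp hq hdm.
rewrite /boxplus coef_sum.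
under eq_bigr => K _ do rewrite coefZ coefXn.
case: (leqP s d) => hs; last first.
  rewrite [in RHS]big1 ?mulr0; last first.
    by move=> k _; rewrite nth_default ?mul0r // hp; lia.
  apply: big1 => k _.
  have -> : (s == d - k)%N = false by apply/negbTE; apply/eqP; lia.
  by rewrite mulr0.
have hK : (d - s < d.+1)%N by lia.
rewrite [in LHS](bigD1 (Ordinal hK)) //= [X in _ + X = _]big1 ?addr0; last first.
  move=> K hne. have -> : (s == d - K)%N = false; last by rewrite mulr0.
  apply/negbTE; apply: contra hne => /eqP h; apply/eqP/val_inj => /=.
  have := ltn_ord K; lia.
rewrite subKn // eqxx mulr1.
set F := (fun k : nat => p`_(s + (d - k)) * ((s + (m - d) + (d - k))`!%:R / (s + (m - d))`!%:R) *
     ((s + (d - k))`!%:R / s`!%:R) *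
     (q`_k * ((k + (m - d))`!%:R / (m - d)`!%:R) * k`!%:R)).
have -> : \sum_(k < d.+1) p`_(s + (d - k)) * ((s + (m - d) + (d - k))`!%:R / (s + (m - d))`!%:R) *
     ((s + (d - k))`!%:R / s`!%:R) *
     (q`_k * ((k + (m - d))`!%:R / (m - d)`!%:R) * k`!%:R) = \sum_(0 <= k < d.+1) F k.
  by rewrite big_mkord.
rewrite (big_cat_nat (leq0n s) (leqW hs)) /=.
rewrite [in RHS]big_nat_cond [in RHS]big1 ?add0r; last first.
  rewrite /F.
  by move=> k /andP[/andP[_ hk] _]; rewrite nth_default ?mul0r // hp; lia.
rewrite [in RHS](_ : s = 0 + s)%N // big_addn big_mkord subSn // mulr_sumr mulr_sumr.
apply: eq_bigr => i _.
have hi := ltn_ord i.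
move: (nat_of_ord i) hi => {}i hi.
have [j hj] : exists j, d = (s + i + j)%N by exists (d - s - i)%N; lia.
have [e he] : exists e, m = (d + e)%N by exists (m - d)%N; lia.
subst m d.
rewrite /F /scoef.
have -> : (s + i + j - s - i = j)%N by lia.
have -> : (s + i + j - s = i + j)%N by lia.
have -> : (s + i + j - i = s + j)%N by lia.
have -> : (s + i + j - j = s + i)%N by lia.
have -> : (s + i + j + e - i = s + j + e)%N by lia.
have -> : (s + i + j + e - j = s + i + e)%N by lia.
have -> : (s + i + j + e - (i + j) = s + e)%N by lia.
have -> : (s + i + j + e - (s + i + j) = e)%N by lia.
have -> : (s + i + j - (i + s) = j)%N by lia.
have -> : (s + e + j = s + j + e)%N by lia.
have -> : (i + s = s + i)%N by lia.
set G := (X in (-1) ^+ (i + j) * (X * _ * _)).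
set P := p`_(s + j); set Q := q`_(s + i).
have -> : (-1) ^+ (i + j) * (G * ((-1) ^+ i * P) * ((-1) ^+ j * Q)) =
   ((-1) ^+ i * (-1) ^+ i) * ((-1) ^+ j * (-1) ^+ j) * (G * P * Q) :> R.
  by rewrite exprD; ring.
rewrite -!exprMn mulrNN mulr1 !expr1n !mul1r /G !natrM.
have h1 := fact_neq0 R s; have h2 := fact_neq0 R e.
have h3 := fact_neq0 R (s + i + j); have h4 := fact_neq0 R (s + i + j + e).
have h5 := fact_neq0 R (s + e).
field.
by rewrite h1 h2 h3 h4 h5.
Qed.


Theorem mainTheorem13 (R : realFieldType) (d m : nat) (p q : {poly R}) :
  (1 <= d)%N -> (d <= m)%N ->
  deg_nonneg_roots d p -> deg_nonneg_roots d q ->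
  biv d m (boxplus d m p q) =
    ((m - d)`!%:R / (d`! * m`!)%:R : R)%:P%:P *
      \sum_(k < d.+1) iter (d - k) (@dXdY R) (biv d m p) *
                      (evalXY (iter k (@dXdY R) (biv d m q)) 0 1)%:P%:P
  /\
  boxplus d m p q =
    ((m - d)`!%:R / (d`! * m`!)%:R : R)%:P *
      \sum_(k < d.+1) evalY (iter (d - k) (@dXdY R) (biv d m p)) 1 *
                      (evalXY (iter k (@dXdY R) (biv d m q)) 0 1)%:P.
Proof.
move=> _ hdm [hp _] [hq _].
have P1 : biv d m (boxplus d m p q) =
    ((m - d)`!%:R / (d`! * m`!)%:R : R)%:P%:P *
      \sum_(k < d.+1) iter (d - k) (@dXdY R) (biv d m p) *
                      (evalXY (iter k (@dXdY R) (biv d m q)) 0 1)%:P%:P.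
  apply/polyP => l; apply/polyP => s.
  rewrite coef_biv coefCM coefCM [in RHS]coef_sum [in RHS]coef_sum.

  under [in RHS]eq_bigr => k _ do rewrite coefMC coefMC coef_iter coef_biv evalXY_iter.
  case: (eqVneq l (s + (m-d))%N) => [->|hne].
    rewrite (@key R d m p q s hp hq hdm); congr (_ * _); apply: eq_bigr => k _.
    by rewrite addnAC eqxx.
  rewrite big1 ?mulr0 // => k _.
  have -> : (l + (d-k) == s + (d-k) + (m-d))%N = false by rewrite addnAC eqn_add2r (negbTE hne).
  by rewrite !mul0r.
split => //.
have := congr1 (fun P => evalY P 1) P1.
rewrite evalY_biv => ->.
rewrite /evalY hornerM hornerC horner_sum; congr (_ * _).
by apply: eq_bigr => k _; rewrite hornerM hornerC.
Qed.
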